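(* Let $\mathcal{O}$ be an oriented matroid of rank $r$ on $E$, $f\in E$, $I=[e_1,\dots,e_k]$ ($k\le r$) an ordered set of independent elements (possibly $f\in I$), and $\mathcal{O}'=\mathcal{O}\cup p=\mathcal{O}[e_1^+,\dots,e_k^+]$. Let $X,Y$ be conformal cocircuits of $\mathcal{O}'$ with $X_p=Y_p\neq 0$ and $X\circ Y$ an edge of $\mathcal{O}'$, and suppose both $X$ and $Y$ have index $i$ with respect to $I$, where $1\le i\le k$ and $f\ne e_i$ (so $X_{e_i}=Y_{e_i}\ne0$). If $X_f\neq Y_f$, or $X_f=Y_f=0$, or $\mathrm{Dir}_{(\mathcal{O}',e_i,f)}(X,Y)\neq 0$, then $\mathrm{Dir}_{(\mathcal{O}',e_i,f)}(X,Y)=\mathrm{Dir}_{(\mathcal{O}',p,f)}(X,Y)$, and, whenever $X_f=Y_f\neq 0$, also $\mathrm{Dir}_{(\mathcal{O}',f,e_i)}(X,Y)=\mathrm{Dir}_{(\mathcal{O}',f,p)}(X,Y)$.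
   Context: Oriented matroid $\mathcal{O}$ of rank $r$ on finite $E$, given by its cocircuits (sign vectors in $\{+,-,0\}^E$). Notation: $z(X)$ zero set, $\operatorname{sep}(X,Y)=\{e:X_e=-Y_e\ne0\}$, $(X\circ Y)_e=X_e$ if $X_e\ne0$, else $Y_e$; conformal means $\operatorname{sep}=\emptyset$. An edge is a covector whose zero set is a flat of rank $r-2$; cocircuits $X\ne\pm Y$ are comodular if $X\circ Y$ is an edge. For comodular $X,Y$ and $e\in\operatorname{sep}(X,Y)$, cocircuit elimination of $e$ between $X$ and $Y$ yields the unique cocircuit $Z$ with $Z_e=0$ and $Z_h=(X\circ Y)_h$ for $h\notin\operatorname{sep}(X,Y)$. For an oriented matroid $\mathcal{Q}$ on ground set $E'$, distinct $a,b\in E'$ and comodular cocircuits $X,Y$ of $\mathcal{Q}$ with $X_a=Y_a\ne0$, let $Z$ be obtained by eliminating $a$ between $-X$ and $Y$ and set $\mathrm{Dir}_{(\mathcal{Q},a,b)}(X,Y)=Z_b$; if $X_a\ne0$ and $Y_a=0$ set $\mathrm{Dir}_{(\mathcal{Q},a,b)}(X,Y)=Y_b$, and if $X_a=0$, $Y_a\neq 0$ set it to $-X_b$. The index of a cocircuit $Y$ w.r.t. $I=[e_1,\dots,e_k]$ is the smallest $i$ with $Y_{e_i}\ne0$, or $k+1$ if none. The positive lexicographic extension $\mathcal{O}[e_1^+,\dots,e_k^+]=\mathcal{O}\cup p$ is the single-element extension with localization $\sigma(Y)=Y_{e_i}$ if the index $i$ of $Y$ is $\le k$, and $\sigma(Y)=0$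 otherwise. *)

(* Defs.v *)
From mathcomp Require Import all_boot.
Set Implicit Arguments. Unset Strict Implicit. Unset Printing Implicit Defensive.

(* Signs: None = 0, Some true = +, Some false = - *)
Definition sign := option bool.
Definition sopp (s : sign) : sign := omap negb s.

Section SignVectors.
Variable T : finType.

Local Notation svec := {ffun T -> sign}.

Definition vzero : svec := [ffun _ => None].
Definition vopp (X : svec) : svec := [ffun e => sopp (X e)].
Definition zset (X : svec) : {set T} := [set e | X e == None].
Definition supp (X : svec) : {set T} := [set e | X e != None].
Definition sep (X Y : svec) : {set T} :=
  [set e | (X e != None) && (X e == sopp (Y e))].
Definition vcomp (X Y : svec) : svec :=
  [ffun e => if X e is Some b then Some b else Y e].
Definition conformal (X Y : svec) : bool := sep X Y == set0.

Definition is_OM (C : {set svec}) : Prop :=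
  [/\ vzero \notin C,
      forall X, X \in C -> vopp X \in C,
      forall X Y, X \in C -> Y \in C -> supp X \subset supp Y ->
        X = Y \/ X = vopp Y &
      forall X Y e, X \in C -> Y \in C -> X != vopp Y -> e \in sep X Y ->
        exists2 Z, Z \in C &
          Z e = None /\ forall g, Z g != None -> Z g = X g \/ Z g = Y g].

Definition spanning (C : {set svec}) (S : {set T}) : bool :=
  [forall X in C, ~~ [disjoint S & supp X]].
Definition basis (C : {set svec}) (B : {set T}) : bool :=
  spanning C B && [forall B' : {set T}, (B' \proper B) ==> ~~ spanning C B'].
Definition indep (C : {set svec}) (A : {set T}) : bool :=
  [exists B : {set T}, basis C B && (A \subset B)].
Definition rank (C : {set svec}) (A : {set T}) : nat :=
  \max_(B : {set T} | indep C B && (B \subset A)) #|B|.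
Definition rankOM (C : {set svec}) : nat := rank C [set: T].

Inductive covector (C : {set svec}) : svec -> Prop :=
| covector0 : covector C vzero
| covectorS X Y : X \in C -> covector C Y -> covector C (vcomp X Y).

Definition edge (C : {set svec}) (W : svec) : Prop :=
  covector C W /\ rank C (zset W) + 2 = rankOM C.

Definition comodular (C : {set svec}) (X Y : svec) : Prop :=
  [/\ X \in C, Y \in C, X <> Y, X <> vopp Y & edge C (vcomp X Y)].

(* Cocircuit elimination of e between comodular X and Y: the (unique)
   cocircuit Z with Z_e = 0 and Z_h = (X o Y)_h for h notin sep(X,Y). *)
Definition elim (C : {set svec}) (X Y : svec) (e : T) : option svec :=
  [pick Z in C | (Z e == None) &&
     [forall h, (h \notin sep X Y) ==> (Z h == vcomp X Y h)]].

(* Dir_(C,a,b)(X,Y); returns 0 in the cases where the paper leaves it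
   undefined (X_a = -Y_a <> 0, or X_a = Y_a = 0). *)
Definition Dir (C : {set svec}) (a b : T) (X Y : svec) : sign :=
  if X a != None then
    if Y a == X a then
      (if elim C (vopp X) Y a is Some Z then Z b else None)
    else if Y a == None then Y b else None
  else if Y a != None then sopp (X b) else None.

End SignVectors.

Notation svec T := {ffun T -> sign}.

Arguments vzero {T}.

(* Single-element extensions: ground set option E, the new element p is None *)
Section Extension.
Variable E : finType.

Definition restr (W : svec (option E)) : svec E := [ffun e => W (Some e)].
Definition extv (Y : svec E) (s : sign) : svec (option E) :=
  [ffun o => if o is Some e then Y e else s].

(* C' is the cocircuit set of a single-element extension O' = O u p of the
   oriented matroid with cocircuits C, with localization sigma:
   O' is an oriented matroid, O' \ p = O (cocircuits of the deletion are the
   support-minimal nonzero restrictions), and (Y, sigma Y) is a cocircuit of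
   O' for every cocircuit Y of O. *)
Definition single_ext (C : {set svec E}) (C' : {set svec (option E)})
    (sigma : svec E -> sign) : Prop :=
  [/\ is_OM C',
      (forall Y, Y \in C <->
        [/\ Y != vzero,
            exists2 W, W \in C' & restr W = Y &
            forall W, W \in C' -> supp (restr W) \proper supp Y ->
              restr W = vzero]) &
      forall Y, Y \in C -> extv Y (sigma Y) \in C'].

(* Localization of the positive lexicographic extension O[e1+,...,ek+] *)
Definition lexsig (I : seq E) (Y : svec E) : sign :=
  nth None [seq Y e | e <- I] (find (fun e => Y e != None) I).

(* 1-based index of a cocircuit of O' w.r.t. I (k+1 if none) *)
Definition cindex (I : seq E) (X : svec (option E)) : nat :=
  (find (fun e => X (Some e) != None) I).+1.

End Extension.

(* Main.v *)
Require Import Defs.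
From mathcomp Require Import all_boot.
From mathcomp Require Import zify.
Set Implicit Arguments. Unset Strict Implicit. Unset Printing Implicit Defensive.

Lemma soppK : involutive sopp. Proof. by case=> [[]|]. Qed.
Lemma sopp_None s : (sopp s == None) = (s == None). Proof. by case: s. Qed.
Lemma sopp_None' s : sopp s = None -> s = None. Proof. by case: s. Qed.

Section OM.
Variable T : finType.
Variable C : {set svec T}.
Hypothesis HOM : is_OM C.

Lemma voppE (Z : svec T) x : vopp Z x = sopp (Z x). Proof. by rewrite ffunE. Qed.
Lemma voppK : involutive (@vopp T).
Proof. by move=> Z; apply/ffunP=> x; rewrite !ffunE soppK. Qed.
Lemma opp_in Z : Z \in C -> vopp Z \in C. Proof. by case: HOM => _ H _ _; apply: H. Qed.

Lemma nonzero Z : Z \in C -> exists x, Z x != None.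
Proof.
case: HOM => H0 _ _ _ ZC.
apply/existsP; apply: contraT => /existsPn H.
have E : Z = vzero by apply/ffunP=> x; rewrite ffunE; apply/eqP; move: (H x); rewrite negbK.
by move: H0; rewrite -E ZC.
Qed.

Lemma supp_pm Z1 Z2 : Z1 \in C -> Z2 \in C ->
  (forall x, Z1 x != None -> Z2 x != None) -> Z1 = Z2 \/ Z1 = vopp Z2.
Proof.
case: HOM => _ _ H _ Z1C Z2C S; apply: H => //; apply/subsetP=> x; rewrite !inE; exact: S.
Qed.

Lemma elimC Z1 Z2 x : Z1 \in C -> Z2 \in C -> Z1 != vopp Z2 -> Z1 x != None ->
  Z1 x = sopp (Z2 x) ->
  exists2 Z, Z \in C & Z x = None /\ forall g, Z g != None -> Z g = Z1 g \/ Z g = Z2 g.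
Proof.
case: HOM => _ _ _ H Z1C Z2C Hn H1 H2; apply: H => //.
by rewrite inE H1 H2 eqxx.
Qed.

Lemma pm_neq (Z1 Z2 : svec T) x : Z1 x = None -> Z2 x != None -> Z1 <> Z2 /\ Z1 <> vopp Z2.
Proof.
move=> H1 H2; split=> E; move: H2.
  by rewrite -E H1.
by rewrite -sopp_None -voppE -E H1.
Qed.

Lemma weak_elim Z1 Z2 x : Z1 \in C -> Z2 \in C -> Z1 != Z2 -> Z1 != vopp Z2 ->
  Z1 x != None -> Z2 x != None ->
  exists2 Z, Z \in C & Z x = None /\
    forall g, Z g != None -> (Z1 g != None) || (Z2 g != None).
Proof.
move=> Z1C Z2C n1 n2 h1 h2.
case E1: (Z1 x) h1 => [b1|] // _; case E2: (Z2 x) h2 => [b2|] // _.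
have [eb|eb] := boolP (b1 == ~~ b2).
- have e1 : Z1 x != None by rewrite E1.
  have e2 : Z1 x = sopp (Z2 x) by rewrite E1 E2 (eqP eb).
  have [Z ZC [Zx HZ]] := elimC Z1C Z2C n2 e1 e2.
  exists Z => //; split => // g /[dup] Hg /HZ [] <-; rewrite Hg ?orbT //.
- have e1 : Z1 x != None by rewrite E1.
  have e2 : Z1 x = sopp (vopp Z2 x) by rewrite voppE soppK E1 E2; move: eb; clear; case: b1; case: b2.
  have n3 : Z1 != vopp (vopp Z2) by rewrite voppK.
  have [Z ZC [Zx HZ]] := elimC Z1C (opp_in Z2C) n3 e1 e2.
  exists Z => //; split => // g /[dup] Hg /HZ [] E; first by rewrite -E Hg.
  by move: Hg; rewrite E voppE sopp_None => ->; rewrite orbT.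
Qed.

Definition uset (Z1 Z2 : svec T) := [set g | (Z1 g != None) || (Z2 g != None)].

Lemma strong_elim_n n : forall Z1 Z2 x y, #|uset Z1 Z2| <= n ->
  Z1 \in C -> Z2 \in C -> Z1 x != None -> Z2 x != None -> Z1 y != None -> Z2 y = None ->
  exists2 Z, Z \in C & [/\ Z x = None, Z y != None &
    forall g, Z g != None -> (Z1 g != None) || (Z2 g != None)].
Proof.
elim: n => [|n IH] Z1 Z2 x y Hc Z1C Z2C h1x h2x h1y h2y.
  by move: Hc; rewrite leqn0 => /eqP/card0_eq/(_ x); rewrite inE h1x.
have [n1 n2] := pm_neq (Z1 := Z2) (Z2 := Z1) h2y h1y.
have m1 : Z1 != Z2 by apply/eqP => E; exact: n1 (esym E).
have m2 : Z1 != vopp Z2 by apply/eqP => E; apply: n2; rewrite E voppK.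
have [Z3 Z3C [Z3x HZ3]] := weak_elim Z1C Z2C m1 m2 h1x h2x.
have [Z3y|Z3y] := boolP (Z3 y != None).
  by exists Z3 => //; split.
move: Z3y; rewrite negbK => /eqP Z3y.
have /existsP [g /andP [Z3g /eqP Z1g]] : [exists g, (Z3 g != None) && (Z1 g == None)].
  apply: contraT => /existsPn H.
  have H' : forall g, Z3 g != None -> Z1 g != None by move=> g Hg; move: (H g); rewrite Hg.
  case: (supp_pm Z3C Z1C H') => E; move: h1x.
    by rewrite -E Z3x.
  by rewrite -sopp_None -voppE -E Z3x.
have Z2g : Z2 g != None by move: (HZ3 g Z3g); rewrite Z1g.
have sub23 : uset Z2 Z3 \subset uset Z1 Z2 :\ y.
  apply/subsetP=> h; rewrite !inE => /orP[] H.
    by rewrite H orbT andbT; apply/eqP => E; move: H; rewrite E h2y.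
  by rewrite (HZ3 h H) andbT; apply/eqP => E; move: H; rewrite E Z3y.
have c23 : #|uset Z2 Z3| <= n.
  move: Hc; rewrite (cardsD1 y) inE h1y /= add1n ltnS => Hc.
  exact: leq_trans (subset_leq_card sub23) Hc.
have [Z4 Z4C [Z4g Z4x HZ4]] := IH Z2 Z3 g x c23 Z2C Z3C Z2g Z3g h2x Z3x.
have sub14 : uset Z1 Z4 \subset uset Z1 Z2 :\ g.
  apply/subsetP=> h; rewrite !inE => /orP[] H.
    by rewrite H andbT; apply/eqP => E; move: H; rewrite E Z1g.
  move: (HZ4 h H) => /orP[] H'.
    by rewrite H' orbT andbT; apply/eqP => E; move: H; rewrite E Z4g.
  by rewrite (HZ3 h H') andbT; apply/eqP => E; move: H; rewrite E Z4g.
have c14 : #|uset Z1 Z4| <= n.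
  move: Hc; rewrite (cardsD1 g) inE Z2g orbT /= add1n ltnS => Hc.
  exact: leq_trans (subset_leq_card sub14) Hc.
have Z4y : Z4 y = None.
  apply/eqP; apply: contraT => H; move: (HZ4 y H) => /orP[]; by rewrite ?h2y ?Z3y.
have [Z5 Z5C [Z5x Z5y HZ5]] := IH Z1 Z4 x y c14 Z1C Z4C h1x Z4x h1y Z4y.
exists Z5 => //; split => // h Hh; move: (HZ5 h Hh) => /orP[] H; first by rewrite H.
move: (HZ4 h H) => /orP[] H'; first by rewrite H' orbT.
by move: (HZ3 h H').
Qed.

Lemma strong_elim Z1 Z2 x y :
  Z1 \in C -> Z2 \in C -> Z1 x != None -> Z2 x != None -> Z1 y != None -> Z2 y = None ->
  exists2 Z, Z \in C & [/\ Z x = None, Z y != None &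
    forall g, Z g != None -> (Z1 g != None) || (Z2 g != None)].
Proof. exact: (@strong_elim_n #|uset Z1 Z2|). Qed.

Lemma elim1 Z1 Z2 a : Z1 \in C -> Z2 \in C -> Z1 != Z2 -> Z1 != vopp Z2 ->
  exists2 Z, Z \in C & Z a = None /\
    forall g, Z g != None -> (Z1 g != None) || (Z2 g != None).
Proof.
move=> Z1C Z2C n1 n2.
case E1: (Z1 a) => [b1|]; last by exists Z1 => //; split => // g ->.
case E2: (Z2 a) => [b2|]; last by exists Z2 => //; split => // g ->; rewrite orbT.
apply: weak_elim => //; by rewrite ?E1 ?E2.
Qed.

Lemma null3 Z1 Z2 Z3 e a b : Z1 \in C -> Z2 \in C -> Z3 \in C ->
  Z1 != Z2 -> Z1 != vopp Z2 -> Z1 e = None -> Z2 e = None -> Z3 e != None ->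
  exists2 Z, Z \in C & [/\ Z a = None, Z b = None &
    forall g, Z g != None -> [|| Z1 g != None, Z2 g != None | Z3 g != None]].
Proof.
move=> Z1C Z2C Z3C n1 n2 h1 h2 h3.
have [F1 F1C [F1a HF1]] := elim1 a Z1C Z2C n1 n2.
have F1e : F1 e = None.
  by apply/eqP; apply: contraT => H; move: (HF1 e H); rewrite h1 h2.
have fin : forall F2, F2 \in C -> F2 a = None -> F2 e != None ->
   (forall g, F2 g != None -> [|| Z1 g != None, Z2 g != None | Z3 g != None]) ->
   exists2 Z, Z \in C & [/\ Z a = None, Z b = None &
    forall g, Z g != None -> [|| Z1 g != None, Z2 g != None | Z3 g != None]].
  move=> F2 F2C F2a F2e HF2.
  have [m1 m2] := pm_neq F1e F2e.
  have m1' : F1 != F2 by apply/eqP.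
  have m2' : F1 != vopp F2 by apply/eqP.
  have [Z ZC [Zb HZ]] := elim1 b F1C F2C m1' m2'.
  exists Z => //; split => //.
    by apply/eqP; apply: contraT => H; move: (HZ a H); rewrite F1a F2a.
  move=> g /HZ /orP[] H; first by move: (HF1 g H) => /orP[] ->; rewrite ?orbT.
  exact: HF2.
case E3: (Z3 a) => [c|].
  case E1: (Z1 a) => [c1|].
    have q3 : Z3 a != None by rewrite E3.
    have q1 : Z1 a != None by rewrite E1.
    have [F2 F2C [F2a F2e HF2]] := strong_elim Z3C Z1C q3 q1 h3 h1.
    by apply: (fin F2) => // g /HF2 /orP[] ->; rewrite ?orbT.
  case E2: (Z2 a) => [c2|].
    have q3 : Z3 a != None by rewrite E3.
    have q2 : Z2 a != None by rewrite E2.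
    have [F2 F2C [F2a F2e HF2]] := strong_elim Z3C Z2C q3 q2 h3 h2.
    by apply: (fin F2) => // g /HF2 /orP[] ->; rewrite ?orbT.
  have [Z ZC [Zb HZ]] := elim1 b Z1C Z2C n1 n2.
  exists Z => //; split => //.
    by apply/eqP; apply: contraT => H; move: (HZ a H); rewrite E1 E2.
  by move=> g /HZ /orP[] ->; rewrite ?orbT.
by apply: (fin Z3) => // g ->; rewrite !orbT.
Qed.

Lemma exists_basis : exists B, basis C B.
Proof.
have sT : spanning C setT.
  apply/forallP => Z; apply/implyP => ZC.
  have [x Hx] := nonzero ZC.
  apply/negP => D; have := disjointFr D (in_setT x); by rewrite inE Hx.
case: (arg_minnP (fun B : {set T} => #|B|) sT) => B sB minB.
exists B; rewrite /basis sB /=; apply/forallP => B'; apply/implyP => pB.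
apply/negP => sB'; have := minB B' sB'; rewrite leqNgt.
by rewrite (proper_card pB).
Qed.

Lemma rank_wit A k : rank C A + k = rankOM C ->
  exists B, spanning C B /\ #|B :\: A| <= k.
Proof.
move=> Hr.
have [B0 bB0] := exists_basis.
pose P := fun B : {set T} => indep C B && (B \subset A).
have P0 : P set0.
  by rewrite /P sub0set andbT; apply/existsP; exists B0; rewrite bB0 sub0set.
move: Hr; rewrite /rank (@bigmax_eq_arg _ set0 P (fun B : {set T} => #|B|) P0).
case: arg_maxnP => // Bw /andP [iBw sBw] _.
move: iBw => /existsP [Bb /andP [bBb sBb]] Hr.
exists Bb; split; first by case/andP: bBb.
have le1 : #|Bb| <= rankOM C.
  rewrite /rankOM /rank.
  have Pb : indep C Bb && (Bb \subset [set: T]).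
    by rewrite subsetT andbT; apply/existsP; exists Bb; rewrite bBb subxx.
  exact: (@leq_bigmax_cond _ (fun B => indep C B && (B \subset [set: T])) (fun B : {set T} => #|B|) Bb Pb).
have le2 : #|Bw| <= #|Bb :&: A| by apply: subset_leq_card; rewrite subsetI sBb sBw.
have := cardsID A Bb; lia.
Qed.

Lemma line_unique (L : {set T}) Z1 Z2 Z3 e :
  rank C L + 2 = rankOM C ->
  Z1 \in C -> Z2 \in C -> Z3 \in C ->
  (forall x, x \in L -> Z1 x = None) -> (forall x, x \in L -> Z2 x = None) ->
  (forall x, x \in L -> Z3 x = None) ->
  Z1 e = None -> Z2 e = None -> Z3 e != None -> Z1 = Z2 \/ Z1 = vopp Z2.
Proof.
move=> Hr Z1C Z2C Z3C L1 L2 L3 h1 h2 h3.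
case: (eqVneq Z1 Z2) => [->|n1]; first by left.
case: (eqVneq Z1 (vopp Z2)) => [->|n2]; first by right.
exfalso.
have [B [sB cB]] := rank_wit Hr.
set s := enum (B :\: L).
have [Z ZC [Za Zb HZ]] := null3 (nth e s 0) (nth e s 1) Z1C Z2C Z3C n1 n2 h1 h2 h3.
have := forallP sB Z; rewrite ZC /= disjoint_subset => /subsetPn [x xB]; rewrite !inE negbK => Zx.
have xL : x \notin L.
  apply/negP => xL; move: (HZ x Zx); by rewrite L1 ?L2 ?L3.
have xs : x \in s by rewrite mem_enum inE xL xB.
have : index x s < 2.
  by apply: leq_trans (cB); rewrite cardE index_mem.
move: (nth_index e xs); case: (index x s) => [|[|n]] //= Hx _.
  by move: Zx; rewrite -Hx Za.
by move: Zx; rewrite -Hx Zb.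
Qed.
End OM.

Section Lex.
Variables (E : finType) (I : seq E) (i : nat) (f : E).
Hypothesis Hi : 0 < i <= size I.

Lemma lexsig_at (Z : svec E) : (forall j, j < i.-1 -> Z (nth f I j) = None) ->
  Z (nth f I i.-1) != None -> lexsig I Z = Z (nth f I i.-1).
Proof.
move=> Hb Hn.
have lt : i.-1 < size I by case/andP: Hi; case: i.
have hasI : has (fun e => Z e != None) I.
  by apply/hasP; exists (nth f I i.-1) => //; rewrite mem_nth.
have Hf : find (fun e => Z e != None) I = i.-1.
  apply/eqP; rewrite eqn_leq; apply/andP; split.
    rewrite leqNgt; apply/negP => H; move: (before_find f H); by rewrite Hn.
  rewrite leqNgt; apply/negP => H; move: (nth_find f hasI); by rewrite Hb.
by rewrite /lexsig Hf (nth_map f).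
Qed.

Lemma lexsig_zero (Z : svec E) : lexsig I Z = None -> Z (nth f I i.-1) = None.
Proof.
have lt : i.-1 < size I by case/andP: Hi; case: i.
rewrite /lexsig.
case: (boolP (has (fun e => Z e != None) I)) => H.
  have lt2 : find (fun e => Z e != None) I < size I by rewrite -has_find.
  rewrite (nth_map f) ?size_map //. move=> E0; move: (nth_find f H); by rewrite E0.
move=> _; move/hasPn: H => /(_ (nth f I i.-1) (mem_nth f lt)); rewrite negbK => /eqP.
done.
Qed.

Lemma cindex_before (X : svec (option E)) : cindex I X = i ->
  (forall j, j < i.-1 -> X (Some (nth f I j)) = None) /\ X (Some (nth f I i.-1)) != None.
Proof.
rewrite /cindex => H.
have lt : i.-1 < size I by case/andP: Hi; case: i.
have Hf : find (fun e => X (Some e) != None) I = i.-1 by rewrite -H.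
split.
  move=> j lj; rewrite -Hf in lj; move: (before_find f lj) => /negbFE /eqP //.
have hasI : has (fun e => X (Some e) != None) I by rewrite has_find Hf.
by move: (nth_find f hasI); rewrite Hf.
Qed.
End Lex.

Section Main.
Variables (E : finType) (C : {set svec E}) (I : seq E) (C' : {set svec (option E)})
  (X Y : svec (option E)) (i : nat) (f : E).
Hypothesis Hext : single_ext C C' (lexsig I).
Hypotheses (XC : X \in C') (YC : Y \in C') (conf : conformal X Y).
Hypotheses (XYp : X None = Y None) (Xp : X None != None).
Let L := zset (vcomp X Y).
Hypothesis Hedge : rank C' L + 2 = rankOM C'.
Hypothesis Hi : 0 < i <= size I.
Hypotheses (cX : cindex I X = i) (cY : cindex I Y = i).
Let ei := nth f I i.-1.

Lemma HOM : is_OM C'. Proof. by case: Hext. Qed.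

Lemma conf_eq h : X h != None -> Y h != None -> X h = Y h.
Proof.
move=> hx hy; case Ex: (X h) hx => [b|] // _; case Ey: (Y h) hy => [c|] // _.
have [/eqP -> //|nbc] := boolP (b == c).
move: conf; rewrite /conformal => /eqP /setP /(_ h); rewrite !inE Ex Ey /=.
by move: nbc; clear; case: b; case: c.
Qed.

Lemma inL h : (h \in L) = (X h == None) && (Y h == None).
Proof. by rewrite /L /zset inE ffunE; case: (X h). Qed.

Lemma pL : None \notin L. Proof. by rewrite inL negb_and Xp. Qed.

Definition vanL (Z : svec (option E)) := forall x, x \in L -> Z x = None.

Lemma XL : vanL X. Proof. by move=> x; rewrite inL => /andP [/eqP]. Qed.
Lemma YL : vanL Y. Proof. by move=> x; rewrite inL => /andP [_ /eqP]. Qed.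
Lemma voppL Z : vanL Z -> vanL (vopp Z). Proof. by move=> H x /H; rewrite voppE => ->. Qed.

Lemma line Z1 Z2 e : Z1 \in C' -> Z2 \in C' -> vanL Z1 -> vanL Z2 ->
  Z1 e = None -> Z2 e = None -> e \notin L -> Z1 = Z2 \/ Z1 = vopp Z2.
Proof.
move=> Z1C Z2C L1 L2 h1 h2 eL.
have [Xe|Xe] := boolP (X e != None).
  exact: (line_unique HOM Hedge Z1C Z2C XC L1 L2 XL h1 h2 Xe).
have Ye : Y e != None by move: Xe eL; rewrite inL negbK => /eqP ->.
exact: (line_unique HOM Hedge Z1C Z2C YC L1 L2 YL h1 h2 Ye).
Qed.

Lemma pm_contra (Z1 Z2 : svec (option E)) x : Z1 = Z2 \/ Z1 = vopp Z2 ->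
  Z1 x = None -> Z2 x != None -> False.
Proof.
case=> -> H; first by rewrite H.
by rewrite voppE in H; move/sopp_None': H => ->.
Qed.

Lemma elimL (Z Z1 Z2 : svec (option E)) : vanL Z1 -> vanL Z2 ->
  (forall g, Z g != None -> Z g = Z1 g \/ Z g = Z2 g) -> vanL Z.
Proof.
move=> L1 L2 H x xL; apply/eqP; apply: contraT => Hx.
by case: (H x Hx) => E0; move: Hx; rewrite E0 ?L1 ?L2.
Qed.

Lemma sepE h : (h \in sep (vopp X) Y) = (X h != None) && (X h == Y h).
Proof.
rewrite inE !voppE sopp_None; case: (X h) => // b; case: (Y h) => // c.
by rewrite /=; case: b; case: c.
Qed.

Lemma vcE h : vcomp (vopp X) Y h = if X h is Some b then Some (~~ b) else Y h.
Proof. by rewrite ffunE voppE; case: (X h). Qed.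

Definition cand e (Z : svec (option E)) := [/\ Z \in C', Z e = None &
  forall h, h \notin sep (vopp X) Y -> Z h = vcomp (vopp X) Y h].

Lemma candL e Z : cand e Z -> vanL Z.
Proof.
case=> _ _ H x; rewrite inL => /andP [/eqP Xx /eqP Yx].
by rewrite H ?sepE ?Xx // vcE Xx.
Qed.

Section NE.
Hypothesis XY : X != Y.

Lemma symdiff : exists h, (exists b, X h = Some b /\ Y h = None) \/
                          (exists b, X h = None /\ Y h = Some b).
Proof.
have /existsP [h Hh] : [exists h, X h != Y h].
  apply: contraT => /existsPn H; exfalso; move/negP: XY; apply; apply/eqP; apply/ffunP=> h.
  by apply/eqP; move: (H h); rewrite negbK.
exists h; case Ex: (X h) Hh => [b|]; case Ey: (Y h) => [c|] //.
- move=> H; move: (conf_eq (h := h)); rewrite Ex Ey => /(_ isT isT) E0.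
  by move: H; rewrite E0 eqxx.
- by move=> _; left; exists b.
- by move=> _; right; exists c.
Qed.

Lemma cand_uniq e Z1 Z2 : X e != None -> cand e Z1 -> cand e Z2 -> Z1 = Z2.
Proof.
move=> Xe c1 c2.
have eL : e \notin L by rewrite inL negb_and Xe.
case: (c1) => Z1C h1 H1; case: (c2) => Z2C h2 H2.
case: (line Z1C Z2C (candL c1) (candL c2) h1 h2 eL) => // E0.
exfalso; have [h [[b [Xh Yh]]|[b [Xh Yh]]]] := symdiff.
- have ns : h \notin sep (vopp X) Y by rewrite sepE Xh Yh.
  move: (H1 h ns) (H2 h ns); rewrite E0 voppE => A B; move: A.
  by rewrite B vcE Xh /=; case: b {Xh}.
- have ns : h \notin sep (vopp X) Y by rewrite sepE Xh.
  move: (H1 h ns) (H2 h ns); rewrite E0 voppE => A B; move: A.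
  by rewrite B vcE Xh Yh /=; case: b {Yh}.
Qed.

Lemma cand_ex e : X e != None -> Y e = X e -> exists Z, cand e Z.
Proof.
move=> Xe Ye.
have nXY : vopp X != vopp Y.
  apply: contra XY => /eqP E0; by rewrite -(voppK X) E0 voppK.
have h1 : vopp X e != None by rewrite voppE sopp_None.
have h2 : vopp X e = sopp (Y e) by rewrite voppE Ye.
have [Z ZC [Ze HZ]] := elimC HOM (opp_in HOM XC) YC nXY h1 h2.
have ZL : vanL Z := elimL (voppL XL) YL HZ.
exists Z; split => // h; rewrite sepE vcE.
case Ex: (X h) => [b|]; case Ey: (Y h) => [c|] /=.
- move=> H; exfalso; move: (conf_eq (h := h)); rewrite Ex Ey => /(_ isT isT) E0.
  by move: H; rewrite E0 eqxx.
- move=> _; have hL : h \notin L by rewrite inL Ex.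
  case EZ: (Z h) => [z|].
    by case: (HZ h) => //; rewrite ?EZ ?voppE ?Ex ?Ey.
  exfalso; apply: (pm_contra (line ZC YC ZL YL EZ Ey hL) Ze); by rewrite Ye.
- move=> _; have hL : h \notin L by rewrite inL Ey andbF.
  case EZ: (Z h) => [z|].
    by case: (HZ h) => //; rewrite ?EZ ?voppE ?Ex ?Ey.
  exfalso; exact: (pm_contra (line ZC XC ZL XL EZ Ex hL) Ze).
- move=> _; apply/eqP; apply: contraT => H; case: (HZ h H) => E0;
  by move: H; rewrite E0 ?voppE ?Ex ?Ey.
Qed.

Lemma DirE a b Z : X a != None -> Y a = X a -> cand a Z -> Dir C' a b X Y = Z b.
Proof.
move=> Xa Ya cZ; rewrite /Dir Xa Ya eqxx /elim.
case: pickP => [Z' /andP [Z'C /andP [/eqP Z'a /forallP HZ']]|H].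
  suff -> : Z' = Z by [].
  apply: (cand_uniq Xa _ cZ); split => // h hs.
  by move: (HZ' h); rewrite hs => /eqP.
exfalso; case: cZ => ZC Za HZ; move: (H Z); rewrite ZC Za eqxx /=.
move/negbT/forallPn => [h]; rewrite negb_imply => /andP [hs /eqP]; apply.
by rewrite HZ.
Qed.
End NE.

Lemma DirXX a b : X a != None -> Dir C' a b X X = None.
Proof.
move=> Xa; rewrite /Dir Xa eqxx /elim.
case: pickP => // Z /andP [ZC /andP [/eqP Za /forallP HZ]].
exfalso; have S : forall x, Z x != None -> X x != None.
  move=> x; apply: contraTneq => Xx.
  have : x \notin sep (vopp X) X by rewrite inE voppE Xx.
  by move/(implyP (HZ x)) => /eqP ->; rewrite ffunE voppE Xx.
exact: (pm_contra (supp_pm HOM ZC XC S) Za Xa).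
Qed.

Lemma restrE (W : svec (option E)) e : restr W e = W (Some e). Proof. by rewrite ffunE. Qed.
Lemma extvE (V : svec E) s o : extv V s o = if o is Some e then V e else s.
Proof. by rewrite ffunE. Qed.

Lemma restr_ext W : W \in C' -> restr W \in C -> W None = lexsig I (restr W).
Proof.
move=> WC rC; case: Hext => _ H2 H3.
set V := restr W; set s := lexsig I V.
have W'C : extv V s \in C' by apply: H3.
have Vnz : V != vzero by case: (H2 V) => /(_ rC) [].
have cmp : W = extv V s \/ W = vopp (extv V s).
  have [c|c] := boolP ((W None == None) || (s != None)).
    apply: (supp_pm HOM WC W'C) => -[e|]; rewrite extvE -?restrE //.
    by case/orP: c => [/eqP ->|].
  move: c; rewrite negb_or negbK => /andP [Wn /eqP sn].
  have S' : forall x, extv V s x != None -> W x != None.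
    case=> [e|]; rewrite extvE ?restrE //; by rewrite sn.
  case: (supp_pm HOM W'C WC S') => [o|E0].
  - exfalso; move: Wn; by rewrite -o extvE sn.
  - exfalso; move: Wn; by rewrite -(voppK W) -E0 voppE extvE sn.
case: cmp => [->|E0]; first by rewrite extvE.
exfalso; move/negP: Vnz; apply; apply/eqP; apply/ffunP => e.
have : V e = sopp (V e) by rewrite {1}/V restrE {1}E0 voppE extvE /V restrE.
move=> H; rewrite [vzero e]ffunE; move: H; case: (V e) => [b|] // /eqP; by case: b.
Qed.

Let ei' := Some ei.
Lemma Xei : X ei' != None. Proof. by case: (cindex_before f Hi cX). Qed.
Lemma Yei : Y ei' != None. Proof. by case: (cindex_before f Hi cY). Qed.
Lemma XYei : Y ei' = X ei'. Proof. by rewrite (conf_eq Xei Yei). Qed.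
Lemma eiL : ei' \notin L. Proof. by rewrite inL negb_and Xei. Qed.

Lemma D1 W : W \in C' -> W None != None -> restr W \in C.
Proof.
move=> WC Wp; case: Hext => _ H2 H3; apply/H2; split.
- apply/eqP => Wz.
  have S : forall x, W x != None -> X x != None.
    by case=> [e|] // H; move: H; rewrite -restrE Wz ffunE.
  apply: (pm_contra (supp_pm HOM WC XC S) _ Xei).
  by rewrite -restrE Wz ffunE.
- by exists W.
- move=> W' W'C /properP [sub [g gW gW']].
  apply/eqP; apply: contraT => nz; exfalso.
  have S : forall e, W' (Some e) != None -> W (Some e) != None.
    by move=> e H; move/subsetP: sub => /(_ e); rewrite !inE !restrE; apply.
  move: gW gW'; rewrite !inE !restrE negbK => gW /eqP gW'.
  have [W'p|W'p] := boolP (W' None != None); last first.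
    have S' : forall x, W' x != None -> W x != None.
      case=> [e|] H; first exact: S.
      by rewrite H in W'p.
    by apply: (pm_contra (supp_pm HOM W'C WC S') _ Wp); apply/eqP; rewrite -(negbK (W' None == None)) W'p.
  pose W'' := if W' None == sopp (W None) then W' else vopp W'.
  have W''C : W'' \in C' by rewrite /W''; case: ifP => _ //; apply: opp_in; [exact: HOM | done].
  have W''p : W None = sopp (W'' None).
    rewrite /W''; case: ifP => [/eqP ->|]; first by rewrite soppK.
    rewrite voppE soppK; move: Wp W'p; case: (W None) => // b; case: (W' None) => // c _ _.
    by case: b; case: c.
  have W''g : W'' (Some g) = None by rewrite /W''; case: ifP => _; rewrite ?voppE gW'.
  have n : W != vopp W''.
    by apply/eqP; case: (pm_neq W''g gW) => _ H E0; move: gW; rewrite E0 voppE W''g.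
  have [Z ZC [Zp HZ]] := elimC HOM WC W''C n Wp W''p.
  have S' : forall x, Z x != None -> W x != None.
    case=> [e|]; last by rewrite Zp.
    move=> H; case: (HZ _ H) => E0; move: H; rewrite E0 // => H; apply: S.
    by move: H; rewrite /W''; case: ifP => _ //; rewrite voppE sopp_None.
  exact: (pm_contra (supp_pm HOM ZC WC S') Zp Wp).
Qed.

Lemma D0 W g : W \in C' -> W None = None -> vanL W -> W (Some g) = None ->
  Some g \notin L -> restr W \in C.
Proof.
move=> WC Wp WL Wg gL; case: Hext => _ H2 H3; apply/H2; split.
- apply/eqP => Wz; have [x Hx] := nonzero HOM WC.
  case: x Hx => [e|]; last by rewrite Wp.
  by rewrite -restrE Wz ffunE.
- by exists W.
- move=> W' W'C /properP [sub [h hW hW']].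
  apply/eqP; apply: contraT => nz; exfalso.
  have S : forall e, W' (Some e) != None -> W (Some e) != None.
    by move=> e H; move/subsetP: sub => /(_ e); rewrite !inE !restrE; apply.
  have S0 : forall e, W (Some e) = None -> W' (Some e) = None.
    move=> e H; apply/eqP; apply: contraT => H'; move: (S e H'); by rewrite H.
  move: hW hW'; rewrite !inE !restrE negbK => hW /eqP hW'.
  have [W'p|W'p] := boolP (W' None != None); last first.
    have S' : forall x, W' x != None -> W x != None.
      case=> [e|] H; first exact: S.
      by rewrite H in W'p.
    case: (supp_pm HOM W'C WC S') => E0; move: hW'.
      by rewrite E0 => H; rewrite H in hW.
    by rewrite E0 voppE => /sopp_None' H; rewrite H in hW.
  have W'L : vanL W'.
    case=> [e|] eL; last by have := pL; rewrite eL.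
    by apply: S0; apply: WL.
  exact: (pm_contra (line WC W'C WL W'L Wg (S0 g Wg) gL) Wp W'p).
Qed.

Lemma parallel V : V \in C' -> vanL V -> V None != None -> V ei' != None ->
  V None = V ei'.
Proof.
move=> VC VL Vp Vei.
rewrite (restr_ext VC (D1 VC Vp)) (lexsig_at (f:=f) Hi) ?restrE //.
move=> j lj; rewrite restrE; apply: VL; rewrite inL.
by case: (cindex_before f Hi cX) => /(_ j lj) -> _; case: (cindex_before f Hi cY) => /(_ j lj) -> _.
Qed.

Section NE2.
Hypothesis XY : X != Y.
Let f' := Some f.

Lemma K1 Zi Zp : cand ei' Zi -> cand None Zp ->
  (X f' != Y f' \/ (X f' = None /\ Y f' = None) \/ Zi f' != None) ->
  Zi f' = Zp f'.
Proof.
move=> ci cp Hd.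
have ciL := candL ci; have cpL := candL cp.
case: (ci) => ZiC Zie HZi; case: (cp) => ZpC Zpp HZp.
have [Zip|Zip] := eqVneq (Zi None) None.
  have c' : cand None Zi by split.
  by rewrite (cand_uniq XY Xp c' cp).
have [Zpe|Zpe] := eqVneq (Zp ei') None.
  have c' : cand ei' Zp by split.
  by rewrite (cand_uniq XY Xei ci c').
have [//|nf] := eqVneq (Zi f') (Zp f').
exfalso.
case Ei: (Zi f') nf => [u|]; case Ep: (Zp f') => [v|] // nf.
- have Zif : Zi f' != None by rewrite Ei.
  have Zpf : Zp f' != None by rewrite Ep.
  have sepf : Zi f' = sopp (Zp f').
    by rewrite Ei Ep; move: nf; clear; case: u; case: v.
  have n : Zi != vopp Zp by apply/eqP; case: (pm_neq Zie Zpe).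
  have [V VC [Vf HV]] := elimC HOM ZiC ZpC n Zif sepf.
  have VL := elimL ciL cpL HV.
  have [Vei|Vei] := eqVneq (V ei') None.
    exact: (pm_contra (line VC ZiC VL ciL Vei Zie eiL) Vf Zif).
  have [Vp|Vp] := eqVneq (V None) None.
    exact: (pm_contra (line VC ZpC VL cpL Vp Zpp pL) Vf Zpf).
  have Vt : V ei' = Zp ei' by case: (HV _ Vei) => // E0; move: Vei; rewrite E0 Zie.
  have Vs : V None = Zi None by case: (HV _ Vp) => // E0; move: Vp; rewrite E0 Zpp.
  have st : Zi None = Zp ei' by rewrite -Vs -Vt; exact: parallel VC VL Vp Vei.
  have Xa : X None = X ei' := parallel XC XL Xp Xei.
  have [sa|sa] := eqVneq (Zi None) (X None).
  + have n2 : Zi != vopp (vopp X) by rewrite voppK; apply/eqP; case: (pm_neq Zie Xei).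
    have h2 : Zi None = sopp (vopp X None) by rewrite voppE soppK.
    have [V' V'C [V'p HV']] := elimC HOM ZiC (opp_in HOM XC) n2 Zip h2.
    have V'L := elimL ciL (voppL XL) HV'.
    case: (line V'C ZpC V'L cpL V'p Zpp pL) => E0.
      have q : V' ei' = X ei' by rewrite E0 -st sa Xa.
      have q' : V' ei' != None by rewrite q Xei.
      case: (HV' _ q'); rewrite q ?Zie ?voppE => H; first by move: Xei; rewrite H.
      by move: Xei H; case: (X ei') => // -[] _ /eqP.
    have [h [[b [Xh Yh]]|[b [Xh Yh]]]] := symdiff XY.
    * have ns : h \notin sep (vopp X) Y by rewrite sepE Xh Yh.
      have Zph : Zp h = Some (~~ b) by rewrite HZp // vcE Xh.
      have Zih : Zi h = Some (~~ b) by rewrite HZi // vcE Xh.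
      have Vh : V' h = Some b by rewrite E0 voppE Zph /= negbK.
      have Vh' : V' h != None by rewrite Vh.
      by case: (HV' _ Vh'); rewrite Vh ?Zih ?voppE ?Xh //= => -[]; case: b {Xh Vh Zph Zih}.
    * have ns : h \notin sep (vopp X) Y by rewrite sepE Xh.
      have Zph : Zp h = Some b by rewrite HZp // vcE Xh Yh.
      have Zih : Zi h = Some b by rewrite HZi // vcE Xh Yh.
      have Vh : V' h = Some (~~ b) by rewrite E0 voppE Zph.
      have Vh' : V' h != None by rewrite Vh.
      by case: (HV' _ Vh'); rewrite Vh ?Zih ?voppE ?Xh //= => -[]; case: b {Yh Vh Zph Zih}.
  + have h2 : Zi None = sopp (Y None).
      rewrite -XYp; move: sa Zip Xp; case: (Zi None) => // c; case: (X None) => // d.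
      by case: c; case: d.
    have n2 : Zi != vopp Y by apply/eqP; case: (pm_neq Zie Yei).
    have [V' V'C [V'p HV']] := elimC HOM ZiC YC n2 Zip h2.
    have V'L := elimL ciL YL HV'.
    case: (line V'C ZpC V'L cpL V'p Zpp pL) => E0.
      have q : V' ei' = Zi None by rewrite E0 -st.
      have q' : V' ei' != None by rewrite q.
      case: (HV' _ q'); rewrite q ?Zie => H; first by rewrite H in Zip.
      by move: sa; rewrite H XYei -Xa eqxx.
    have [h [[b [Xh Yh]]|[b [Xh Yh]]]] := symdiff XY.
    * have ns : h \notin sep (vopp X) Y by rewrite sepE Xh Yh.
      have Zph : Zp h = Some (~~ b) by rewrite HZp // vcE Xh.
      have Zih : Zi h = Some (~~ b) by rewrite HZi // vcE Xh.
      have Vh : V' h = Some b by rewrite E0 voppE Zph /= negbK.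
      have Vh' : V' h != None by rewrite Vh.
      by case: (HV' _ Vh'); rewrite Vh ?Zih ?Yh //= => -[]; case: b {Xh Vh Zph Zih}.
    * have ns : h \notin sep (vopp X) Y by rewrite sepE Xh.
      have Zph : Zp h = Some b by rewrite HZp // vcE Xh Yh.
      have Zih : Zi h = Some b by rewrite HZi // vcE Xh Yh.
      have Vh : V' h = Some (~~ b) by rewrite E0 voppE Zph.
      have Vh' : V' h != None by rewrite Vh.
      by case: (HV' _ Vh'); rewrite Vh ?Zih ?Yh //= => -[]; case: b {Yh Vh Zph Zih}.
- have fL : f' \notin L by apply/negP => H; move: (ciL _ H); rewrite Ei.
  have rC := D0 ZpC Zpp cpL Ep fL.
  have := restr_ext ZpC rC; rewrite Zpp => /esym /(lexsig_zero f Hi).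
  by rewrite restrE => H; move: Zpe; rewrite /ei' /ei H eqxx.
- have fL : f' \notin L by apply/negP => H; move: (cpL _ H); rewrite Ep.
  case: Hd => [d1|[[d2 d3]|d3]].
  + case EX: (X f') d1 => [x|]; case EY: (Y f') => [y|] // d1.
    * by move: (conf_eq (h := f')); rewrite EX EY => /(_ isT isT) E0; move: d1; rewrite E0 eqxx.
    * exact: (pm_contra (line ZiC YC ciL YL Ei EY fL) Zie Yei).
    * exact: (pm_contra (line ZiC XC ciL XL Ei EX fL) Zie Xei).
  + by move: fL; rewrite inL d2 d3 !eqxx.
  + by rewrite Ei in d3.
Qed.

Lemma K2 Zi Zp Zf : cand ei' Zi -> cand None Zp -> cand f' Zf -> Zi f' != None ->
  Zi f' = Zp f' -> Zf ei' = Zf None.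
Proof.
move=> ci cp cf Zif ip.
have ciL := candL ci; have cpL := candL cp; have cfL := candL cf.
case: ci => ZiC Zie _; case: cp => ZpC Zpp _; case: cf => ZfC Zff _.
have Zpf : Zp f' != None by rewrite -ip.
have [Zfe|Zfe] := eqVneq (Zf ei') None.
  by exfalso; exact: (pm_contra (line ZfC ZiC cfL ciL Zfe Zie eiL) Zff Zif).
have [Zfp|Zfp] := eqVneq (Zf None) None.
  by exfalso; exact: (pm_contra (line ZfC ZpC cfL cpL Zfp Zpp pL) Zff Zpf).
by symmetry; exact: parallel ZfC cfL Zfp Zfe.
Qed.
End NE2.

Lemma main_sec :
  (X (Some f) != Y (Some f) \/ (X (Some f) = None /\ Y (Some f) = None)
     \/ Dir C' (Some ei) (Some f) X Y != None) ->
  Dir C' (Some ei) (Some f) X Y = Dir C' None (Some f) X Y /\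
  (X (Some f) = Y (Some f) -> X (Some f) != None ->
     Dir C' (Some f) (Some ei) X Y = Dir C' (Some f) None X Y).
Proof.
case: (eqVneq X Y) => [EXY|XY] Hd.
  have Xe := Xei; rewrite -EXY; split; first by rewrite !DirXX.
  by move=> _ Xf; rewrite !DirXX.
have [Zi ci] := cand_ex XY Xei XYei.
have [Zp cp] := cand_ex XY Xp (esym XYp).
have D1e := DirE XY (Some f) Xei XYei ci.
have D2e := DirE XY (Some f) Xp (esym XYp) cp.
have Zif : X (Some f) = Y (Some f) -> X (Some f) != None -> Zi (Some f) != None.
  move=> Exy Xf; case: Hd => [d|[[d _]|d]].
  - by rewrite Exy eqxx in d.
  - by rewrite d in Xf.
  - by rewrite -D1e.
have k1 : Zi (Some f) = Zp (Some f).
  apply: (K1 XY ci cp); case: Hd => [d|[d|d]]; [by left | by right; left | right; right].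
  by rewrite -D1e.
rewrite D1e D2e; split => // Exy Xf.
have [Zf cf] := cand_ex XY Xf (esym Exy).
rewrite (DirE XY (Some ei) Xf (esym Exy) cf) (DirE XY None Xf (esym Exy) cf).
exact: (K2 ci cp cf (Zif Exy Xf) k1).
Qed.
End Main.

Theorem lemma3p5 (E : finType) (C : {set svec E}) (r : nat) (f : E)
    (I : seq E) (C' : {set svec (option E)}) (X Y : svec (option E)) (i : nat) :
  let p : option E := None in
  is_OM C -> rankOM C = r ->
  uniq I -> indep C [set e in I] -> size I <= r ->
  single_ext C C' (lexsig I) ->
  X \in C' -> Y \in C' -> conformal X Y ->
  X p = Y p -> X p != None ->
  edge C' (vcomp X Y) ->
  1 <= i <= size I ->
  let ei := nth f I i.-1 in
  f != ei ->
  cindex I X = i -> cindex I Y = i ->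
  (X (Some f) != Y (Some f) \/ (X (Some f) = None /\ Y (Some f) = None)
     \/ Dir C' (Some ei) (Some f) X Y != None) ->
  Dir C' (Some ei) (Some f) X Y = Dir C' p (Some f) X Y /\
  (X (Some f) = Y (Some f) -> X (Some f) != None ->
     Dir C' (Some f) (Some ei) X Y = Dir C' (Some f) p X Y).
Proof.
move=> p _ _ _ _ _ Hext XC YC conf XYp Xp [_ Hedge] Hi ei _ cX cY Hd.
exact: (main_sec Hext XC YC conf XYp Xp Hedge Hi cX cY Hd).
Qed.
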